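(* Let $G=(V,E)$ be a graph, $c\ge1$, $\epsilon\in[0,1/3)$, let $\kappa(G)=(V,\kappa(E))$ be an $(\epsilon,c)$-kernel of $G$ with tight nodes $\kappa_T(V)$, and let $M$ be a matching in $\kappa(G)$ such that every augmenting path in $\kappa(G)$ with respect to $M$ has length at least five. Let $F_T$ be the set of tight nodes unmatched in $M$. Then $|F_T|\le(1+3\epsilon)|M|$.
   Context: Let $\mathcal N_v$ denote the set of neighbors of $v$ in $G$. A subgraph $\kappa(G)=(V,\kappa(E))$ with $\kappa(E)\subseteq E$ is given, together with a partition of $V$ into tight nodes $\kappa_T(V)$ and slack nodes $\kappa_S(V)$. For $v\in V$ let $\kappa(\mathcal N_v)=\{u\in\mathcal N_v:(u,v)\in\kappa(E)\}$ (the friends of $v$). For $c\ge1$ and $\epsilon\in[0,1/3)$, $\kappa(G)$ is an $(\epsilon,c)$-kernel of $G$ (w.r.t. this partition) iff: (i) $|\kappa(\mathcal N_v)|\le(1+\epsilon)c$ for all $v\in V$; (ii) $|\kappa(\mathcal N_v)|\ge(1-\epsilon)c$ for all $v\in\kappa_T(V)$; (iii) for all $u,v\in\kappa_S(V)$, if $(u,v)\in E$ then $(u,v)\in\kappa(E)$. Given a matching $M$ in a graph $H$, an augmenting path of length $2k+1$ ($k \ge 0$) is a simple path in $H$ with $2k+1$ edges whose two end nodes are unmatched in $M$ and whose edges alternate between non-$M$ and $M$ edges (first and last edges not in $M$). *)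

(* Defs.v *)
From HB Require Import structures.
From mathcomp Require Import all_boot all_order all_algebra.
Set Implicit Arguments. Unset Strict Implicit. Unset Printing Implicit Defensive.
Import Order.TTheory GRing.Theory Num.Theory.
Local Open Scope ring_scope.

Definition simple_graph (V : finType) (E : rel V) : Prop :=
  symmetric E /\ irreflexive E.

Definition subgraph (V : finType) (E kE : rel V) : Prop :=
  symmetric kE /\ subrel kE E.

Definition friends (V : finType) (E kE : rel V) (v : V) : {set V} :=
  [set u | E u v && kE u v].

(* (eps,c)-kernel w.r.t. the partition V = T (tight) + ~:T (slack). *)
Definition is_kernel (R : realFieldType) (V : finType) (E kE : rel V)
    (T : {set V}) (eps c : R) : Prop :=
  subgraph E kE /\
  (forall v : V, (#|friends E kE v|%:R : R) <= (1 + eps) * c) /\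
  (forall v : V, v \in T -> (1 - eps) * c <= (#|friends E kE v|%:R : R)) /\
  (forall u v : V, u \notin T -> v \notin T -> E u v -> kE u v).

Definition is_matching (V : finType) (H : rel V) (M : {set {set V}}) : Prop :=
  (forall e, e \in M -> exists u v, [/\ u != v, H u v & e = [set u; v]]) /\
  (forall e1 e2, e1 \in M -> e2 \in M -> e1 != e2 -> [disjoint e1 & e2]).

Definition matched (V : finType) (M : {set {set V}}) (v : V) : bool :=
  [exists e in M, v \in e].

(* An augmenting path of length 2k+1 in H w.r.t. M, given as its sequence
   of 2k+2 vertices p = [v_0; ...; v_{2k+1}]: simple, consecutive vertices
   adjacent in H, edge i (v_i v_{i+1}) is in M iff i is odd (so the first
   and last edges are not in M), and both ends are unmatched. *)
Definition augmenting_path (V : finType) (H : rel V) (M : {set {set V}})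
    (k : nat) (p : seq V) : Prop :=
  exists x : V,
  [/\ size p = (2 * k + 2)%N,
      uniq p,
      (forall i, (i < 2 * k + 1)%N -> H (nth x p i) (nth x p i.+1)),
      (forall i, (i < 2 * k + 1)%N ->
          ([set nth x p i; nth x p i.+1] \in M) = odd i) &
      (~~ matched M (nth x p 0) /\ ~~ matched M (nth x p (2 * k + 1)))].

(* Main.v *)
Require Import Defs.
From HB Require Import structures.
From mathcomp Require Import all_boot all_order all_algebra.
From mathcomp Require Import zify ring lra.
Import Order.TTheory GRing.Theory Num.Theory.
Local Open Scope ring_scope.

Lemma dcount (V : finType) (F : {set V}) (P : V -> V -> bool) :
  (\sum_(v in F) #|[set u | P u v]| = \sum_u #|[set v in F | P u v]|)%N.
Proof.
transitivity (\sum_(v in F) \sum_u (P u v : nat))%N.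
  apply: eq_bigr => v _; rewrite -sum1_card big_mkcond /=.
  by apply: eq_bigr => u _; rewrite inE; case: (P u v).
rewrite exchange_big /=; apply: eq_bigr => u _.
rewrite -sum1_card [LHS]big_mkcond [RHS]big_mkcond /=.
by apply: eq_bigr => v _; rewrite inE; case: (v \in F); case: (P u v).
Qed.

Section Aug.
Variables (V : finType) (kE : rel V) (M : {set {set V}}).
Hypothesis kEirr : irreflexive kE.
Hypothesis Haug : forall (k : nat) (p : seq V), augmenting_path kE M k p -> (5 <= 2 * k + 1)%N.

Lemma mem_matched e v : e \in M -> v \in e -> matched M v.
Proof. by move=> eM ve; apply/existsP; exists e; rewrite eM ve. Qed.
Arguments mem_matched {e v}.

Lemma no_aug1 u v : ~~ matched M u -> ~~ matched M v -> kE u v -> False.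
Proof.
move=> mu mv huv.
have hp : augmenting_path kE M 0 [:: u; v].
  exists u; split => //.
  - rewrite /= inE andbT; apply/eqP => e; subst; by rewrite kEirr in huv.
  - by case=> [|i].
  - case=> [|i] // _ /=; apply/negbTE/negP => hM.
    by move/negP: mu; apply; exact: mem_matched hM (set21 u v).
by have := Haug _ _ hp; rewrite ?ltnn.
Qed.

Lemma no_aug3 x a b y : ~~ matched M x -> ~~ matched M y -> x != y ->
  [set a; b] \in M -> a != b -> kE x a -> kE a b -> kE b y -> False.
Proof.
move=> mx my xy abM ab hxa hab hby.
have ma := mem_matched abM (set21 a b).
have mb := mem_matched abM (set22 a b).
have xa : x != a by apply/eqP => e; move: mx; rewrite e ma.
have xb : x != b by apply/eqP => e; move: mx; rewrite e mb.
have ya : a != y by apply/eqP => e; move: my; rewrite -e ma.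
have yb : b != y by apply/eqP => e; move: my; rewrite -e mb.
have hp : augmenting_path kE M 1 [:: x; a; b; y].
  exists x; split => //.
  - by rewrite /= !inE !negb_or xa xb xy ab ya yb.
  - by case=> [|[|[|i]]].
  - case=> [|[|[|i]]] //= _; apply/negbTE/negP => hM.
    + by move/negP: mx; apply; exact: mem_matched hM (set21 x a).
    + by move/negP: my; apply; exact: mem_matched hM (set22 b y).
by have := Haug _ _ hp; rewrite ?ltnn.
Qed.
End Aug.

Theorem lemma3p14 (R : realFieldType) (V : finType) (E kE : rel V)
    (T : {set V}) (eps c : R) (M : {set {set V}}) :
  simple_graph E ->
  1 <= c -> 0 <= eps -> eps < 1 / 3 ->
  is_kernel E kE T eps c ->
  is_matching kE M ->
  (forall (k : nat) (p : seq V), augmenting_path kE M k p -> (5 <= 2 * k + 1)%N) ->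
  (#|[set v in T | ~~ matched M v]|%:R : R) <= (1 + 3 * eps) * (#|M|%:R).
Proof.
move=> [Esym Eirr] c1 eps0 eps3 [[kEsym kEsub] [Hup [Hlo _]]] [Medge Mdisj] Haug.
have kEirr : irreflexive kE by move=> x; apply/negbTE/negP => /kEsub; rewrite Eirr.
set F := [set v in T | ~~ matched M v].
pose N u := #|[set v in F | kE v u]|.
have FP v : v \in F -> (v \in T) && ~~ matched M v by rewrite inE.
have low : #|F|%:R * ((1 - eps) * c) <= (\sum_(v in F) #|friends E kE v|)%:R :> R.
  rewrite natr_sum mulr_natl -sumr_const; apply: ler_sum => v /FP /andP[vT _].
  exact: Hlo.
have ex : (\sum_(v in F) #|friends E kE v| = \sum_u N u)%N.
  rewrite /friends dcount; apply: eq_bigr => u _; apply: eq_card => v.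
  have hE : kE v u -> E u v by move=> h; apply: kEsub; rewrite kEsym.
  rewrite !inE [kE u v]kEsym.
  by case h: (kE v u); rewrite ?andbF ?andbT ?hE ?andbT.
have triv : trivIset M by apply/trivIsetP => A B; exact: Mdisj.
have cov : (\sum_u N u = \sum_(u in cover M) N u)%N.
  rewrite (bigID (fun u => u \in cover M)) /= [X in (_ + X)%N]big1 ?addn0 //.
  move=> u uc; apply/eqP; rewrite cards_eq0; apply/eqP/setP => v; rewrite !inE.
  apply/negbTE/negP => /andP[/andP[_ mv] hvu].
  apply: (@no_aug1 _ _ _ kEirr Haug _ _ mv _ hvu).
  apply/negP => /existsP[e /andP[eM ue]]; move/negP: uc; apply.
  by apply/bigcupP; exists e.
rewrite big_trivIset // in cov.
have edge e : e \in M -> ((\sum_(u in e) N u)%:R <= (1 + eps) * c :> R).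
  move=> eM; have [a [b [ab hab ee]]] := Medge e eM; subst e.
  rewrite big_setU1 ?inE // big_set1.
  suff [w hw] : exists w, (N a + N b <= #|friends E kE w|)%N.
    by apply: le_trans (Hup w); rewrite ler_nat.
  have NaS : [set v in F | kE v a] \subset friends E kE a.
    by apply/subsetP => v; rewrite !inE => /andP[_ h]; rewrite h kEsub.
  have NbS : [set v in F | kE v b] \subset friends E kE b.
    by apply/subsetP => v; rewrite !inE => /andP[_ h]; rewrite h kEsub.
  have [Nb0|] := eqVneq (N b) 0%N.
    by exists a; rewrite Nb0 addn0; apply: subset_leq_card.
  have [Na0|] := eqVneq (N a) 0%N.
    by exists b; rewrite Na0; apply: subset_leq_card.
  rewrite /N -!lt0n => /card_gt0P[x]; rewrite inE => /andP[xF hxa].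
  move=> /card_gt0P[y]; rewrite inE => /andP[yF hyb].
  have [_ mx] := andP (FP _ xF); have [_ my] := andP (FP _ yF).
  have Na1 : (#|[set v in F | kE v a]| <= 1)%N.
    rewrite -(cards1 y); apply: subset_leq_card; apply/subsetP => v.
    rewrite !inE => /andP[vF hva]; apply/negPn/negP => vy.
    have /andP[_ mv] : (v \in T) && ~~ matched M v by move: vF; rewrite ?inE.
    by apply: (@no_aug3 _ _ _ Haug _ _ _ _ mv my vy eM ab hva hab); rewrite kEsym.
  have Nb1 : (#|[set v in F | kE v b]| <= 1)%N.
    rewrite -(cards1 x); apply: subset_leq_card; apply/subsetP => v.
    rewrite !inE => /andP[vF hvb]; apply/negPn/negP => vx.
    have /andP[_ mv] : (v \in T) && ~~ matched M v by move: vF; rewrite ?inE.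
    apply: (@no_aug3 _ _ _ Haug _ _ _ _ mx mv _ eM ab hxa hab); first by rewrite eq_sym.
    by rewrite kEsym.
  exists a; apply: (leq_trans (leq_add Na1 Nb1)).
  have xb : x != b.
    by apply/eqP => e; move: mx; rewrite e (@mem_matched _ M _ _ eM (set22 a b)).
  apply: (@leq_trans #|[set x; b]|); first by rewrite cards2 xb.
  apply: subset_leq_card.
  apply/subsetP => v; rewrite !inE => /orP[] /eqP ->.
    by rewrite hxa kEsub.
  by rewrite kEsym hab kEsub // kEsym.
have up : (\sum_(v in F) #|friends E kE v|)%:R <= #|M|%:R * ((1 + eps) * c) :> R.
  rewrite ex cov natr_sum mulr_natl -sumr_const; exact: ler_sum.
have key : #|F|%:R * (1 - eps) <= #|M|%:R * (1 + eps) :> R.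
  have c0 : 0 < c by apply: lt_le_trans c1.
  rewrite -(ler_pM2r c0) -!mulrA; exact: le_trans low up.
have f0 : 0 <= #|F|%:R :> R by [].
have m0 : 0 <= #|M|%:R :> R by [].
have e1 : 0 < 1 - eps by lra.
have h : 0 <= #|M|%:R * eps * (1 - 3 * eps) :> R.
  by apply: mulr_ge0; [apply: mulr_ge0 | lra].
rewrite -(ler_pM2l e1).
lra.
Qed.
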